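(* Let $G=(V,E)$ with colouring $f$ satisfy $|B|>|R|$. Let $G^a=(V,E^a_0)$ be obtained from $G$ by deleting all edges with both ends red, and $G^r=(V,E^r_0)$ be obtained from $G$ by adding all non-edges with both ends blue. Let $E^a$ be an optimal solution to MIAE on $(G^a,f)$ and $E^r$ an optimal solution to MIRE on $(G^r,f)$, and put $A=E^a\setminus E^a_0$ (added edges) and $D=E^r_0\setminus E^r$ (removed edges). Then $E'=(E\setminus D)\cup A$ is an optimal solution to MIE on $(G,f)$, and the optimal MIE cost on $(G,f)$ equals $|A|+|D|$.
   Context: Graphs are finite, simple and undirected; $B,R$ are the blue and red nodes under $f:V\to\{B,R\}$. A node is under (majority) illusion in $(V,E')$ if it has strictly more red than blue neighbours there. An optimal solution to MIAE on $(H=(V,F_0),f)$ is an edge set $F\supseteq F_0$ with no node under illusion in $(V,F)$ and $|F\setminus F_0|$ minimum; an optimal solution to MIRE is $F\subseteq F_0$ with no node under illusion and $|F_0\setminus F|$ minimum; an optimal solution to MIE is any edge set $F$ on $V$ with no node under illusion and $|F_0\setminus F|+|F\setminus F_0|$ minimum. *)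

(* Defs.v *)
From mathcomp Require Import all_boot.
Set Implicit Arguments. Unset Strict Implicit. Unset Printing Implicit Defensive.

(* Vertices: a finite type V.  Colouring f : V -> bool, with
   f v = true  <-> v is blue (v in B),  f v = false <-> v is red (v in R).
   An edge set on V is a set of 2-element subsets of V. *)

Definition edge_set (V : finType) (F : {set {set V}}) : Prop :=
  forall e, e \in F -> #|e| = 2.

Definition blue_nb (V : finType) (f : V -> bool) (F : {set {set V}}) (v : V) : nat :=
  #|[set u | ([set u; v] \in F) && f u]|.

Definition red_nb (V : finType) (f : V -> bool) (F : {set {set V}}) (v : V) : nat :=
  #|[set u | ([set u; v] \in F) && ~~ f u]|.

Definition under_illusion (V : finType) (f : V -> bool) (F : {set {set V}}) (v : V) : Prop :=
  blue_nb f F v < red_nb f F v.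

Definition no_illusion (V : finType) (f : V -> bool) (F : {set {set V}}) : Prop :=
  forall v, ~ under_illusion f F v.

Definition MIAE_opt (V : finType) (f : V -> bool) (F0 F : {set {set V}}) : Prop :=
  [/\ edge_set F, F0 \subset F, no_illusion f F &
      forall F' : {set {set V}}, edge_set F' -> F0 \subset F' -> no_illusion f F' ->
        #|F :\: F0| <= #|F' :\: F0| ].

Definition MIRE_opt (V : finType) (f : V -> bool) (F0 F : {set {set V}}) : Prop :=
  [/\ F \subset F0, no_illusion f F &
      forall F' : {set {set V}}, F' \subset F0 -> no_illusion f F' ->
        #|F0 :\: F| <= #|F0 :\: F'| ].

Definition MIE_cost (V : finType) (F0 F : {set {set V}}) : nat :=
  #|F0 :\: F| + #|F :\: F0|.

Definition MIE_opt (V : finType) (f : V -> bool) (F0 F : {set {set V}}) : Prop :=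
  [/\ edge_set F, no_illusion f F &
      forall F' : {set {set V}}, edge_set F' -> no_illusion f F' ->
        MIE_cost F0 F <= MIE_cost F0 F' ].

Definition del_red_edges (V : finType) (f : V -> bool) (E : {set {set V}}) : {set {set V}} :=
  [set e in E | ~~ [forall x in e, ~~ f x]].

Definition add_blue_edges (V : finType) (f : V -> bool) (E : {set {set V}}) : {set {set V}} :=
  E :|: [set e : {set V} | (#|e| == 2) && [forall x in e, f x]].

(* Main.v *)
Require Import Defs.
From mathcomp Require Import all_boot zify.
Set Implicit Arguments. Unset Strict Implicit. Unset Printing Implicit Defensive.


Lemma set2_eq_cases (V : finType) (y x u v : V) :
  [set y; x] = [set u; v] -> ((y == u) && (x == v)) || ((y == v) && (x == u)).
Proof.
move/setP=> H.
have := H y; have := H x; have := H u; have := H v.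
rewrite !inE !eqxx ?orbT /= => Hv Hu Hx Hy.
case/orP: (esym Hy) => /eqP Ey; subst y.
  case/orP: Hv => /eqP Ev; subst v; last by rewrite !eqxx.
  by case/orP: (esym Hx) => /eqP E; subst; rewrite !eqxx.
case/orP: Hu => /eqP Eu; subst u; last by rewrite !eqxx orbT.
by case/orP: (esym Hx) => /eqP E; subst; rewrite !eqxx ?orbT.
Qed.

Lemma forall2 (V : finType) (P : pred V) (a b : V) :
  [forall x in [set a; b], P x] = P a && P b.
Proof.
apply/forall_inP/andP => [H|[Ha Hb] x].
  by split; apply: H; rewrite !inE eqxx ?orbT.
by rewrite !inE => /orP[]/eqP->.
Qed.

Lemma card2E (V : finType) (e : {set V}) : #|e| = 2 -> exists a b, a != b /\ e = [set a; b].
Proof. by move/eqP/cards2P => [a [b [? ->]]]; exists a, b. Qed.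

Lemma set11_notedge (V : finType) (F : {set {set V}}) u : edge_set F -> [set u; u] \notin F.
Proof. move=> H; apply/negP => /H; by rewrite setUid cards1. Qed.

Lemma ill_mono (V : finType) (f : V -> bool) (F F' : {set {set V}}) x :
  (forall y, f y -> [set y; x] \in F -> [set y; x] \in F') ->
  (forall y, ~~ f y -> [set y; x] \in F' -> [set y; x] \in F) ->
  ~ under_illusion f F x -> ~ under_illusion f F' x.
Proof.
rewrite /under_illusion /blue_nb /red_nb => Hb Hr H1 H2; apply: H1.
apply: (leq_trans _ (leq_trans H2 _)).
  rewrite ltnS; apply: subset_leq_card; apply/subsetP=> y; rewrite !inE => /andP[h1 h2].
  by rewrite h2 Hb.
apply: subset_leq_card; apply/subsetP=> y; rewrite !inE => /andP[h1 h2].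
by rewrite h2 Hr.
Qed.


Definition dset (V : finType) (E F : {set {set V}}) (P : pred {set V}) :=
  [set e | P e && ((e \in F) != (e \in E))].

Lemma dset_change (V : finType) (E F F' : {set {set V}}) (P : pred {set V}) e :
  (forall x, x != e -> (x \in F') = (x \in F)) ->
  #|dset E F' P| + (e \in dset E F P) = #|dset E F P| + (e \in dset E F' P).
Proof.
move=> H; rewrite (cardsD1 e (dset E F' P)) (cardsD1 e (dset E F P)).
have -> : dset E F' P :\ e = dset E F P :\ e.
  by apply/setP => x; rewrite !inE; case: eqVneq => //= hx; rewrite H.
by case: (e \in dset E F' P); case: (e \in dset E F P); rewrite /= ?addn0 ?addn1 ?add1n ?addSn ?addnS.
Qed.

Lemma cost_dset (V : finType) (E F : {set {set V}}) :
  MIE_cost E F = #|dset E F predT|.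
Proof.
rewrite /MIE_cost.
have -> : dset E F predT = (E :\: F) :|: (F :\: E).
  by apply/setP => x; rewrite !inE; case: (x \in E); case: (x \in F).
rewrite cardsU.
have -> : (E :\: F) :&: (F :\: E) = set0.
  by apply/setP => x; rewrite !inE; case: (x \in E); case: (x \in F).
by rewrite cards0 subn0.
Qed.

Lemma addBB_ok (V : finType) (f : V -> bool) (F : {set {set V}}) a b x :
  f a -> f b -> ~ under_illusion f F x -> ~ under_illusion f ([set a; b] |: F) x.
Proof.
move=> fa fb; apply: ill_mono => y fy; first by rewrite !inE => ->; rewrite orbT.
rewrite !inE => /orP[/eqP/set2_eq_cases|//].
by case/orP => /andP[/eqP E _]; move: fy; rewrite E ?fa ?fb.
Qed.

Lemma delRR_ok (V : finType) (f : V -> bool) (F : {set {set V}}) a b x :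
  ~~ f a -> ~~ f b -> ~ under_illusion f F x -> ~ under_illusion f (F :\ [set a; b]) x.
Proof.
move=> fa fb; apply: ill_mono => y fy; last by rewrite !inE => /andP[].
rewrite !inE => ->; rewrite andbT; apply/negP => /eqP/set2_eq_cases.
by case/orP => /andP[/eqP E _]; move: fy; rewrite E ?(negbTE fa) ?(negbTE fb).
Qed.

Lemma blue_full (V : finType) (f : V -> bool) (F : {set {set V}}) v :
  #|[set v | ~~ f v]| < #|[set v | f v]| -> f v ->
  (forall u, f u -> u != v -> [set u; v] \in F) -> ~ under_illusion f F v.
Proof.
rewrite /under_illusion /blue_nb /red_nb => hc fv H.
have h1 : #|[set u | f u] :\ v| <= #|[set u | ([set u; v] \in F) && f u]|.
  apply: subset_leq_card; apply/subsetP=> u; rewrite !inE => /andP[nuv fu].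
  by rewrite fu H.
have h2 : #|[set u | ([set u; v] \in F) && ~~ f u]| <= #|[set u | ~~ f u]|.
  by apply: subset_leq_card; apply/subsetP=> u; rewrite !inE => /andP[].
have h3 := cardsD1 v [set u | f u]; rewrite inE fv in h3.
lia.
Qed.

Lemma BB_not_RR (V : finType) (f : V -> bool) (e : {set V}) :
  #|e| = 2 -> [forall x in e, f x] -> [forall x in e, ~~ f x] -> False.
Proof.
move=> he /forall_inP h1 /forall_inP h2.
have : 0 < #|e| by rewrite he.
case/card_gt0P => x xe; by have := h2 x xe; rewrite h1.
Qed.



Lemma add_gen (V : finType) (E F : {set {set V}}) (P : pred {set V}) (e : {set V}) : e \notin F ->
  #|dset E (e |: F) P| + (P e && (e \in E)) = #|dset E F P| + (P e && (e \notin E)).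
Proof.
move=> eF; have := @dset_change V E F (e |: F) P e.
have H : forall x, x != e -> (x \in e |: F) = (x \in F) by move=> x /negbTE xe; rewrite !inE xe.
move/(_ H); rewrite !inE eqxx (negbTE eF) /=.
by case: (e \in E); case: (P e).
Qed.

Lemma del_gen (V : finType) (E F : {set {set V}}) (P : pred {set V}) (e : {set V}) : e \in F ->
  #|dset E (F :\ e) P| + (P e && (e \notin E)) = #|dset E F P| + (P e && (e \in E)).
Proof.
move=> eF; have := @dset_change V E F (F :\ e) P e.
have H : forall x, x != e -> (x \in F :\ e) = (x \in F) by move=> x xe; rewrite !inE xe.
move/(_ H); rewrite !inE eqxx eF /=.
by case: (e \in E); case: (P e).
Qed.

Lemma add_le (V : finType) (E F : {set {set V}}) (P : pred {set V}) (e : {set V}) : e \notin F -> #|dset E (e |: F) P| <= #|dset E F P| + 1.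
Proof. move/(@add_gen V E F P e); case: (P e); case: (e \in E) => /=; lia. Qed.
Lemma add_le0 (V : finType) (E F : {set {set V}}) (P : pred {set V}) (e : {set V}) : e \notin F -> (e \notin E -> ~~ P e) -> #|dset E (e |: F) P| <= #|dset E F P|.
Proof.
move=> eF H; have := @add_gen V E F P e eF; case: (boolP (e \in E)) => eE; last rewrite (negbTE (H eE));
  rewrite /= ?andbT ?andbF; case: (P e) => /=; lia.
Qed.
Lemma add_lt (V : finType) (E F : {set {set V}}) (P : pred {set V}) (e : {set V}) : e \notin F -> e \in E -> P e -> #|dset E (e |: F) P| < #|dset E F P|.
Proof. move/(@add_gen V E F P e)=> H eE Pe; move: H; rewrite eE Pe /=; lia. Qed.
Lemma del_le (V : finType) (E F : {set {set V}}) (P : pred {set V}) (e : {set V}) : e \in F -> #|dset E (F :\ e) P| <= #|dset E F P| + 1.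
Proof. move/(@del_gen V E F P e); case: (P e); case: (e \in E) => /=; lia. Qed.
Lemma del_le0 (V : finType) (E F : {set {set V}}) (P : pred {set V}) (e : {set V}) : e \in F -> (e \in E -> ~~ P e) -> #|dset E (F :\ e) P| <= #|dset E F P|.
Proof.
move=> eF H; have := @del_gen V E F P e eF; case: (boolP (e \in E)) => eE; first rewrite (negbTE (H eE));
  rewrite /= ?andbT ?andbF; case: (P e) => /=; lia.
Qed.
Lemma del_lt (V : finType) (E F : {set {set V}}) (P : pred {set V}) (e : {set V}) : e \in F -> e \notin E -> P e -> #|dset E (F :\ e) P| < #|dset E F P|.
Proof. move/(@del_gen V E F P e)=> H eE Pe; move: H; rewrite (negbTE eE) Pe /=; lia. Qed.

Lemma edge_add (V : finType) (F : {set {set V}}) a b :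
  edge_set F -> a != b -> edge_set ([set a; b] |: F).
Proof. by move=> H ab e; rewrite !inE => /orP[/eqP->|/H]; rewrite ?cards2 ?ab. Qed.
Lemma edge_del (V : finType) (F : {set {set V}}) e :
  edge_set F -> edge_set (F :\ e).
Proof. by move=> H x; rewrite !inE => /andP[_ /H]. Qed.


Definition RRp (V : finType) (f : V -> bool) (e : {set V}) := [forall x in e, ~~ f x].
Definition BBp (V : finType) (f : V -> bool) (e : {set V}) := [forall x in e, f x].
Definition okp (V : finType) (f : V -> bool) (E : {set {set V}}) (e : {set V}) :=
  ((e \in E) && RRp f e) || ((e \notin E) && BBp f e).
Definition badp (V : finType) (f : V -> bool) (E : {set {set V}}) : pred {set V} :=
  fun e => ~~ okp f E e.

Definition goodstep (V : finType) (f : V -> bool) (E F F1 : {set {set V}}) :=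
  [/\ edge_set F1, no_illusion f F1, #|dset E F1 predT| <= #|dset E F predT| &
      #|dset E F1 (badp f E)| < #|dset E F (badp f E)|].

Lemma case_BRadd (V : finType) (f : V -> bool) (E F : {set {set V}}) u v :
  #|[set v | ~~ f v]| < #|[set v | f v]| -> edge_set F -> no_illusion f F ->
  f u -> ~~ f v -> [set u; v] \in E -> [set u; v] \notin F ->
  exists F1, goodstep f E F F1.
Proof.
move=> hc hF hill fu fv eE eF.
have uv : u != v by apply/eqP => E1; move: fv; rewrite -E1 fu.
set e := [set u; v]; set F1 := e |: F.
have hF1 : edge_set F1 by apply: edge_add.
have c1 : #|dset E F1 predT| < #|dset E F predT| by apply: add_lt.
have b1 : #|dset E F1 (badp f E)| < #|dset E F (badp f E)|.
  by apply: add_lt => //; rewrite /badp /okp eE /= orbF /RRp forall2 fu.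
have feas1 : forall x, x != u -> ~ under_illusion f F1 x.
  move=> x xu; apply: (ill_mono _ _ (hill x)) => y fy; first by rewrite !inE => ->; rewrite orbT.
  rewrite !inE => /orP[/eqP/set2_eq_cases|//].
  case/orP => /andP[/eqP E1 /eqP E2]; first by move: fy; rewrite E1 fu.
  by move: xu; rewrite E2 eqxx.
case: (boolP (blue_nb f F1 u < red_nb f F1 u)) => hu; last first.
  exists F1; split => //; last exact: ltnW.
  move=> x; case: (eqVneq x u) => [->|xu]; [by apply/negP | exact: feas1].
pose S := [set y | ([set y; u] \in F1) && f y].
have SB : S \subset [set y | f y] :\ u.
  apply/subsetP => y; rewrite !inE => /andP[h1 ->]; rewrite andbT.
  apply/eqP => E1; move: h1; rewrite E1 => h; have := set11_notedge u hF1; by rewrite !inE h.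
have hR : red_nb f F1 u <= #|[set v | ~~ f v]|.
  by apply: subset_leq_card; apply/subsetP => y; rewrite !inE => /andP[].
have hB := cardsD1 u [set y | f y]; rewrite inE fu /= in hB.
have : ~~ ([set y | f y] :\ u \subset S).
  apply/negP => /subset_leq_card; rewrite /blue_nb -/S in hu; lia.
case/subsetPn => w; rewrite in_setD1 in_set => /andP[wu fw] wS.
have wS' : [set w; u] \notin F1 by apply/negP => h; move: wS; rewrite /S in_set h fw.
set F2 := [set w; u] |: F1.
exists F2; split.
- exact: edge_add.
- move=> x; case: (eqVneq x u) => [->|xu]; last exact: addBB_ok (feas1 x xu).
  rewrite /under_illusion; apply/negP; rewrite -leqNgt.
  have h1 : #|S| + 1 <= blue_nb f F2 u.
    have := cardsU1 w S; rewrite wS add1n addn1 => <-; apply: subset_leq_card; apply/subsetP => y.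
    rewrite !inE => /orP[/eqP->|/andP[->->]]; by rewrite ?eqxx ?fw ?orbT.
  have h2 : red_nb f F2 u <= red_nb f F1 u.
    apply: subset_leq_card; apply/subsetP => y; rewrite !inE => /andP[/orP[/eqP h|h] fy]; last by rewrite h fy.
    by move: h => /set2_eq_cases/orP[]/andP[/eqP E1 _]; move: fy; rewrite E1 ?fw ?fu.
  have h3 : red_nb f F1 u <= red_nb f F u + 1.
    pose R0 := [set y | ([set y; u] \in F) && ~~ f y].
    have hs : red_nb f F1 u <= #|v |: R0|.
      apply: subset_leq_card; apply/subsetP => y; rewrite !inE => /andP[/orP[/eqP h|h] fy].
        move: h => /set2_eq_cases/orP[]/andP[/eqP E1 /eqP E2]; first by move: fy; rewrite E1 fu.
        by rewrite E1 eqxx.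
      by rewrite h fy orbT.
    rewrite /red_nb -/R0 in hs *; apply: (leq_trans hs); rewrite (cardsU1 v R0) addnC leq_add2l; by case: (_ \notin _).
  have h4 : red_nb f F u <= blue_nb f F u by rewrite leqNgt; apply/negP/hill.
  have h5 : blue_nb f F u <= #|S|.
    apply: subset_leq_card; apply/subsetP => y; rewrite !inE => /andP[-> ->].
    by rewrite orbT.
  lia.
- have := @add_le _ E F1 predT _ wS'=> HH; rewrite -/F2 in HH; lia.
- have : #|dset E F2 (badp f E)| <= #|dset E F1 (badp f E)|.
    by apply: add_le0 => // hE; rewrite /badp /okp (negbTE hE) /= negbK /BBp forall2 fw fu.
  move=> ?; lia.
Qed.


Lemma case_BRdel (V : finType) (f : V -> bool) (E F : {set {set V}}) u v :
  edge_set F -> no_illusion f F ->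
  f u -> ~~ f v -> [set u; v] \notin E -> [set u; v] \in F ->
  exists F1, goodstep f E F F1.
Proof.
move=> hF hill fu fv eE eF.
set e := [set u; v]; set F1 := F :\ e.
have hF1 : edge_set F1 by apply: edge_del.
have c1 : #|dset E F1 predT| < #|dset E F predT| by apply: del_lt.
have b1 : #|dset E F1 (badp f E)| < #|dset E F (badp f E)|.
  by apply: del_lt => //; rewrite /badp /okp (negbTE eE) /= /BBp forall2 (negbTE fv) andbF.
have feas1 : forall x, x != v -> ~ under_illusion f F1 x.
  move=> x xv; apply: (ill_mono _ _ (hill x)) => y fy; last by rewrite !inE => /andP[].
  rewrite !inE => ->; rewrite andbT; apply/negP => /eqP/set2_eq_cases.
  case/orP => /andP[/eqP E1 /eqP E2]; first by move: xv; rewrite E2 eqxx.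
  by move: fy; rewrite E1 (negbTE fv).
case: (boolP (blue_nb f F1 v < red_nb f F1 v)) => hu; last first.
  exists F1; split => //; last exact: ltnW.
  move=> x; case: (eqVneq x v) => [->|xv]; [by apply/negP | exact: feas1].
pose Rs := [set y | ([set y; v] \in F1) && ~~ f y].
have : 0 < #|Rs| by apply: leq_ltn_trans hu.
case/card_gt0P => w; rewrite /Rs in_set => /andP[wF fw].
set F2 := F1 :\ [set w; v].
exists F2; split.
- exact: edge_del.
- move=> x; case: (eqVneq x v) => [->|xv]; last exact: delRR_ok (feas1 x xv).
  rewrite /under_illusion; apply/negP; rewrite -leqNgt.
  have h1 : red_nb f F2 v + 1 <= red_nb f F1 v.
    rewrite /red_nb -/Rs (cardsD1 w Rs) /Rs in_set wF fw /= add1n addn1 ltnS.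
    apply: subset_leq_card; apply/subsetP => y; rewrite !inE.
    case/andP => /andP[ne ->] ->; rewrite andbT /= andbT.
    by apply/eqP => E1; move: ne; rewrite E1 eqxx.
  have h2 : red_nb f F1 v <= red_nb f F v.
    apply: subset_leq_card; apply/subsetP => y; rewrite !inE.
    by case/andP => /andP[_ ->] ->.
  have h3 : red_nb f F v <= blue_nb f F v by rewrite leqNgt; apply/negP/hill.
  have h4 : blue_nb f F v <= blue_nb f F1 v + 1.
    pose B0 := [set y | ([set y; v] \in F1) && f y].
    have hs : blue_nb f F v <= #|u |: B0|.
      apply: subset_leq_card; apply/subsetP => y; rewrite !inE => /andP[yF fy].
      case: (eqVneq y u) => //= yu; rewrite yF fy !andbT.
      apply/negP => /eqP/set2_eq_cases/orP[]/andP[/eqP E1 _]; first by move: yu; rewrite E1 eqxx.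
      by move: fy; rewrite E1 (negbTE fv).
    apply: (leq_trans hs); rewrite (cardsU1 u B0) addnC leq_add2l; by case: (_ \notin _).
  have h5 : blue_nb f F1 v <= blue_nb f F2 v.
    apply: subset_leq_card; apply/subsetP => y; rewrite !inE.
    case/andP => /andP[-> ->] fy; rewrite fy !andbT /=.
    apply/negP => /eqP/set2_eq_cases/orP[]/andP[/eqP E1 _]; move: fy; by rewrite E1 ?(negbTE fw) ?(negbTE fv).
  lia.
- have HH := @del_le _ E F1 predT [set w; v] wF; rewrite -/F2 in HH; lia.
- have : #|dset E F2 (badp f E)| <= #|dset E F1 (badp f E)|.
    by apply: del_le0 => // hE; rewrite /badp /okp hE /= /RRp forall2 fw fv.
  move=> ?; lia.
Qed.

Lemma case_BBadd (V : finType) (f : V -> bool) (E F : {set {set V}}) u v :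
  edge_set F -> no_illusion f F -> u != v ->
  f u -> f v -> [set u; v] \in E -> [set u; v] \notin F ->
  exists F1, goodstep f E F F1.
Proof.
move=> hF hill uv fu fv eE eF; exists ([set u; v] |: F); split.
- exact: edge_add.
- by move=> x; apply: addBB_ok (hill x).
- by apply/ltnW/add_lt.
- apply: add_lt => //; rewrite /badp /okp eE /= orbF /RRp forall2 fu //.
Qed.

Lemma case_RRdel (V : finType) (f : V -> bool) (E F : {set {set V}}) u v :
  edge_set F -> no_illusion f F ->
  ~~ f u -> ~~ f v -> [set u; v] \notin E -> [set u; v] \in F ->
  exists F1, goodstep f E F F1.
Proof.
move=> hF hill fu fv eE eF; exists (F :\ [set u; v]); split.
- exact: edge_del.
- by move=> x; apply: delRR_ok (hill x).
- by apply/ltnW/del_lt.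
- apply: del_lt => //; rewrite /badp /okp (negbTE eE) /= /BBp forall2 (negbTE fu) //.
Qed.


Lemma step (V : finType) (f : V -> bool) (E F : {set {set V}}) :
  #|[set v | ~~ f v]| < #|[set v | f v]| -> edge_set E -> edge_set F -> no_illusion f F ->
  0 < #|dset E F (badp f E)| -> exists F1, goodstep f E F F1.
Proof.
move=> hc hE hF hill /card_gt0P [e]; rewrite inE /badp /okp => /andP[hb hd].
case: (boolP (e \in F)) hd => eF /= hd.
  have eE : e \notin E by move: hd; case: (e \in E).
  move: hb; rewrite (negbTE eE) /=.
  have [a [b [ab ee]]] := card2E (hF e eF); subst e.
  rewrite /BBp forall2.
  case fa: (f a); case fb: (f b) => //= _.
  - by apply: (case_BRdel (u := a) (v := b)); rewrite ?fa ?fb.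
  - by apply: (case_BRdel (u := b) (v := a)); rewrite ?fa ?fb // setUC.
  - by apply: (case_RRdel (u := a) (v := b)); rewrite ?fa ?fb.
have eE : e \in E by move: hd; case: (e \in E).
move: hb; rewrite eE /= orbF.
have [a [b [ab ee]]] := card2E (hE e eE); subst e.
rewrite /RRp forall2.
case fa: (f a); case fb: (f b) => //= _.
- by apply: (case_BBadd (u := a) (v := b)); rewrite ?fa ?fb.
- by apply: (case_BRadd (u := a) (v := b)); rewrite ?fa ?fb.
- by apply: (case_BRadd (u := b) (v := a)); rewrite ?fa ?fb // setUC.
Qed.

Lemma normalize (V : finType) (f : V -> bool) (E : {set {set V}}) :
  #|[set v | ~~ f v]| < #|[set v | f v]| -> edge_set E ->
  forall n F, #|dset E F (badp f E)| <= n -> edge_set F -> no_illusion f F ->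
  exists F2, [/\ edge_set F2, no_illusion f F2, #|dset E F2 predT| <= #|dset E F predT| &
     forall e, (e \in F2) != (e \in E) -> okp f E e].
Proof.
move=> hc hE; elim => [|n IH] F hn hF hill.
  exists F; split => // e he; apply/negPn/negP => hb.
  have : 0 < #|dset E F (badp f E)|.
    by apply/card_gt0P; exists e; rewrite inE /badp hb.
  lia.
case: (posnP #|dset E F (badp f E)|) => h0.
  exists F; split => // e he; apply/negPn/negP => hb.
  have : 0 < #|dset E F (badp f E)|.
    by apply/card_gt0P; exists e; rewrite inE /badp hb.
  lia.
have [F1 [h1 h2 h3 h4]] := step hc hE hF hill h0.
have [F2 [g1 g2 g3 g4]] := IH F1 (ltac:(lia)) h1 h2.
exists F2; split => //; lia.
Qed.


Lemma RR2 (V : finType) (f : V -> bool) a b : RRp f [set a; b] = ~~ f a && ~~ f b.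
Proof. exact: forall2. Qed.
Lemma BB2 (V : finType) (f : V -> bool) a b : BBp f [set a; b] = f a && f b.
Proof. exact: forall2. Qed.

Lemma subset_eq_card (T : finType) (X Y : {set T}) :
  X \subset Y -> #|Y| <= #|X| -> forall x, x \in Y -> x \in X.
Proof. move=> s c; have /eqP -> // : X == Y by rewrite eqEcard s c. Qed.

Lemma red0 (V : finType) (f : V -> bool) (F : {set {set V}}) x :
  (forall y, ~~ f y -> [set y; x] \notin F) -> ~ under_illusion f F x.
Proof.
move=> H; rewrite /under_illusion /red_nb.
have -> : [set u | ([set u; x] \in F) && ~~ f u] = set0.
  apply/setP => y; rewrite !inE; case: (boolP (f y)) => fy; rewrite ?andbF ?andbT //.
  exact/negbTE/H.
by rewrite cards0.
Qed.


Lemma main_abs (V : finType) (f : V -> bool) (E Ea Er dr ab : {set {set V}}) :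
  edge_set E -> #|[set v | ~~ f v]| < #|[set v | f v]| ->
  (forall e, (e \in dr) = (e \in E) && ~~ RRp f e) ->
  (forall e, (e \in ab) = (e \in E) || ((#|e| == 2) && BBp f e)) ->
  MIAE_opt f dr Ea -> MIRE_opt f ab Er ->
  MIE_opt f E ((E :\: (ab :\: Er)) :|: (Ea :\: dr)) /\
  MIE_cost E ((E :\: (ab :\: Er)) :|: (Ea :\: dr)) = #|Ea :\: dr| + #|ab :\: Er|.
Proof.
move=> hE hc mdr mab [ea1 ea2 ea3 ea4] [er1 er2 er3].
have drE : forall e, e \in dr -> e \in E by move=> e; rewrite mdr => /andP[].
have drEa : forall e, e \in dr -> e \in Ea by apply/subsetP.
have Eab : forall e, e \in E -> e \in ab by move=> e; rewrite mab => ->.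
have Erab : forall e, e \in Er -> e \in ab by apply/subsetP.
set A := Ea :\: dr; set D := ab :\: Er.
have mA : forall e, (e \in A) = (e \notin dr) && (e \in Ea) by move=> e; rewrite /A in_setD.
have mD : forall e, (e \in D) = (e \notin Er) && (e \in ab) by move=> e; rewrite /D in_setD.
have ea4' : forall F', edge_set F' -> dr \subset F' -> no_illusion f F' -> #|A| <= #|F' :\: dr|.
  move=> F'; exact: ea4.
have er3' : forall F' : {set {set V}}, F' \subset ab -> no_illusion f F' -> #|D| <= #|ab :\: F'|.
  move=> F'; exact: er3.
have Aedge : forall e, e \in A -> #|e| = 2 by move=> e; rewrite mA => /andP[_ /ea1].
clearbody A D.
have ABB : forall e, e \in A -> BBp f e.
  pose Fa := dr :|: (A :&: [set e | BBp f e]).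
  have Fa4 : #|Fa :\: dr| <= #|A :&: [set e | BBp f e]|.
    apply: subset_leq_card; apply/subsetP => e; rewrite !inE.
    by case/andP => /negbTE -> /=.
  have Fa1 : edge_set Fa.
    move=> e; rewrite !inE => /orP[/drE/hE //|/andP[/Aedge //]].
  have Fa3 : no_illusion f Fa.
    move=> x; case: (boolP (f x)) => fx.
      apply: (ill_mono _ _ (ea3 x)) => y fy.
        rewrite !inE => hy; case: (boolP ([set y; x] \in dr)) => //= hd.
        by rewrite mA hd hy /BBp forall2 fy fx.
      by rewrite !inE => /orP[/drEa //|/andP[]]; rewrite mA => /andP[].
    apply: red0 => y fy; rewrite !inE mdr RR2 fy fx /= andbF /=.
    by rewrite /BBp forall2 (negbTE fx) !andbF.
  have h := leq_trans (ea4' Fa Fa1 (subsetUl _ _) Fa3) Fa4.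
  move=> e eA; have := subset_eq_card (subsetIl A [set e | BBp f e]) h eA.
  by rewrite !inE; case/andP.
have DRR : forall e, e \in D -> RRp f e.
  pose Fr := ab :\: (D :&: [set e | RRp f e]).
  have Fr4 : #|ab :\: Fr| <= #|D :&: [set e | RRp f e]|.
    apply: subset_leq_card; apply/subsetP => e; rewrite !inE.
    by case/andP => h1 h2; move: h1; rewrite h2 andbT negbK.
  have Fr3 : no_illusion f Fr.
    move=> x; case: (boolP (f x)) => fx.
      apply: blue_full => // u fu ux.
      by rewrite !inE mab RR2 fu /= andbF cards2 ux /BBp forall2 fu fx orbT.
    apply: (ill_mono _ _ (er2 x)) => y fy.
      by rewrite !inE RR2 fy /= andbF /= => /Erab.
    rewrite !inE RR2 fy fx /= andbT => /andP[hD hab].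
    by move: hD; rewrite mD hab andbT negbK.
  have h := leq_trans (er3' Fr (subsetDl _ _) Fr3) Fr4.
  move=> e eD; have := subset_eq_card (subsetIl D [set e | RRp f e]) h eD.
  by rewrite !inE; case/andP.
have AnE : forall e, e \in A -> e \notin E.
  move=> e eA; apply/negP => eE; move: (eA); rewrite mA mdr eE /=.
  have -> // : RRp f e = false.
  by apply/negP => hr; apply: (BB_not_RR (Aedge e eA) (ABB e eA) hr).
have DE : forall e, e \in D -> e \in E.
  move=> e eD; move: (eD); rewrite mD mab => /andP[_ /orP[//|/andP[/eqP h hb]]].
  by case: (BB_not_RR h hb (DRR e eD)).
have nAD : forall e, e \in A -> e \in D -> False.
  by move=> e eA eD; apply: (BB_not_RR (Aedge e eA) (ABB e eA) (DRR e eD)).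
set E' := (E :\: D) :|: A.
have cost : MIE_cost E E' = #|A| + #|D|.
  rewrite /MIE_cost addnC.
  have -> : E :\: E' = D.
    apply/setP => e; rewrite !inE; case: (boolP (e \in D)) => eD /=.
      rewrite DE // andbT; apply/negP => eA; exact: nAD eA eD.
    by case: (e \in E); rewrite ?orbT ?andbF.
  have -> : E' :\: E = A.
    apply/setP => e; rewrite !inE; case: (boolP (e \in A)) => eA /=.
      by rewrite orbT (negbTE (AnE e eA)).
    by case: (e \in E); rewrite ?orbF ?andbF.
  by [].
have E'edge : edge_set E'.
  by move=> e; rewrite !inE => /orP[/andP[_ /hE]|/Aedge].
have E'feas : no_illusion f E'.
  move=> x; case: (boolP (f x)) => fx.
    apply: (ill_mono _ _ (ea3 x)) => y fy.
      move=> hp; rewrite !inE; case: (boolP ([set y; x] \in dr)) => pdr.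
        rewrite drE //= andbT; case: (boolP ([set y; x] \in D)) => //= pD.
        by move: (DRR _ pD); rewrite RR2 fy.
      by rewrite mA pdr hp orbT.
    rewrite !inE => /orP[/andP[_ pE]|]; last by rewrite mA => /andP[].
    by apply: drEa; rewrite mdr pE RR2 fx andbF.
  apply: (ill_mono _ _ (er2 x)) => y fy.
    move=> hp; rewrite !inE mD hp /=.
    by move: (Erab _ hp); rewrite mab BB2 (negbTE fx) !andbF orbF => ->.
  rewrite !inE => /orP[/andP[pD pE]|/ABB]; last by rewrite BB2 (negbTE fy).
  by move: pD; rewrite mD Eab // andbT negbK.
split => //; split => // F' hF' hill'.
rewrite cost.
have [F2 [g1 g2 g3 g4]] := normalize hc hE (leqnn _) hF' hill'.
rewrite (cost_dset E F'); apply: leq_trans g3; rewrite -cost_dset /MIE_cost.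
have bA : #|A| <= #|F2 :\: E|.
  pose Fa := dr :|: (F2 :\: E).
  have Fa1 : edge_set Fa by move=> e; rewrite !inE => /orP[/drE/hE|/andP[_ /g1]].
  have Fa3 : no_illusion f Fa.
    move=> x; case: (boolP (f x)) => fx.
      apply: (ill_mono _ _ (g2 x)) => y fy.
        move=> hp; rewrite !inE hp andbT; case: (boolP ([set y; x] \in E)) => pE /=; rewrite ?orbT //.
        by rewrite mdr pE RR2 fy.
      rewrite !inE => /orP[pdr|/andP[]//].
      apply/negPn/negP => pF.
      have := g4 [set y; x]; rewrite (negbTE pF) (drE _ pdr) /= /okp (drE _ pdr) RR2 fx andbF /=.
      by move/(_ isT).
    apply: red0 => y fy; rewrite !inE mdr RR2 fy fx /= andbF /=.
    apply/negP => /andP[pE pF].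
    have := g4 [set y; x]; rewrite pF (negbTE pE) /= /okp (negbTE pE) BB2 (negbTE fx) andbF /=.
    by move/(_ isT).
  apply: (leq_trans (ea4' Fa Fa1 (subsetUl _ _) Fa3)).
  apply: subset_leq_card; apply/subsetP => e; rewrite !inE.
  by case/andP => /negbTE -> /=.
have bD : #|D| <= #|E :\: F2|.
  pose Fr := ab :\: (E :\: F2).
  have Fr3 : no_illusion f Fr.
    move=> x; case: (boolP (f x)) => fx.
      apply: blue_full => // u fu ux.
      rewrite !inE mab cards2 ux /BBp forall2 fu fx !orbT andbT /=.
      apply/negP => /andP[pF pE].
      have := g4 [set u; x]; rewrite (negbTE pF) pE /= /okp pE RR2 fu /=.
      by move/(_ isT).
    apply: (ill_mono _ _ (g2 x)) => y fy.
      move=> hp; rewrite !inE hp /=.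
      case: (boolP ([set y; x] \in E)) => pE; first by rewrite Eab.
      have := g4 [set y; x]; rewrite hp (negbTE pE) /= /okp (negbTE pE) BB2 (negbTE fx) andbF /=.
      by move/(_ isT).
    rewrite !inE mab BB2 (negbTE fx) !andbF orbF => /andP[h1 h2].
    by move: h1; rewrite h2 andbT negbK.
  apply: (leq_trans (er3' Fr (subsetDl _ _) Fr3)).
  apply: subset_leq_card; apply/subsetP => e; rewrite !inE.
  by case/andP => h1 h2; move: h1; rewrite h2 andbT negbK.
lia.
Qed.


Theorem mainTheorem12 (V : finType) (f : V -> bool) (E Ea Er : {set {set V}}) :
  edge_set E ->
  #|[set v | ~~ f v]| < #|[set v | f v]| ->
  MIAE_opt f (del_red_edges f E) Ea ->
  MIRE_opt f (add_blue_edges f E) Er ->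
  let A := Ea :\: del_red_edges f E in
  let D := add_blue_edges f E :\: Er in
  MIE_opt f E ((E :\: D) :|: A) /\
  MIE_cost E ((E :\: D) :|: A) = #|A| + #|D|.
Proof.
move=> hE hc h1 h2 A D; rewrite /A /D.
apply: main_abs => //.
- by move=> e; rewrite /del_red_edges inE andbC.
- by move=> e; rewrite /add_blue_edges !inE.
Qed.
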